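(* Let $\mathcal{A}$ be an Ershov $\mathcal{C}$-algebra. If $\mathcal{A}$ is weakly equationally Noetherian, then for every set of constants $\{c_j \mid j \in J\} \subseteq \mathcal{C}$ that is not bounded above, there exists $c \in \mathcal{C}$ such that the system of equations in one variable $x$ $$\{ x \wedge c_j = 0 \mid j \in J\}$$ is equivalent over $\mathcal{A}$ to the equation $x \leq c$.
   Context: An Ershov algebra is a structure $\langle A; \vee, \wedge, \setminus, 0\rangle$ such that $\langle A;\vee,\wedge\rangle$ is a distributive lattice with least element $0$, and $b \setminus a$ is the relative complement: the unique $z$ with $z \wedge a = 0$ and $z \vee a = a \vee b$. An Ershov $\mathcal{C}$-algebra is an Ershov algebra $\mathcal{A}$ together with a distinguished subalgebra $\mathcal{C}$ whose elements are added as constant symbols; $\mathcal{L}$ is the language $\{\vee,\wedge,\setminus,0\}$ plus these constants. An equation is $t(\bar x)=s(\bar x)$ with $t,s$ terms of $\mathcal{L}$; $t\le s$ means the equation $t\vee s = s$. Two systems of equations are equivalent over $\mathcal{A}$ if they have the same solution set. $\mathcal{A}$ is weakly equationally Noetherian if every system of equations (possibly infinite) in finitely many variables is equivalent over $\mathcal{A}$ to some finite system of equations of $\mathcal{L}$. A set is upper-unbounded if it has no upper bound in $\mathcal{A}$. *)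

(* Defs.v *)
From Stdlib Require List.
(* An Ershov algebra is modelled by MathComp's
   cbDistrLatticeType: a distributive lattice with bottom \bot (= 0) and
   a difference operation x `\` y satisfying
   (x `\` y) `&` y = \bot and (x `\` y) `|` y = x `|` y (relative complement). *)
From mathcomp Require Import all_boot all_order.
Set Implicit Arguments. Unset Strict Implicit. Unset Printing Implicit Defensive.
Import Order.Theory.
Local Open Scope order_scope.

Definition is_subalgebra (disp : Order.disp_t) (A : cbDistrLatticeType disp)
  (C : A -> Prop) : Prop :=
  [/\ C \bot,
      (forall x y, C x -> C y -> C (x `|` y)),
      (forall x y, C x -> C y -> C (x `&` y)) &
      (forall x y, C x -> C y -> C (x `\` y))].

Inductive term (K V : Type) : Type :=
  | TVar of V
  | TConst of K
  | TZero
  | TJoin of term K V & term K V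
  | TMeet of term K V & term K V
  | TDiff of term K V & term K V.

Arguments TZero {K V}.

Definition Lconst (disp : Order.disp_t) (A : cbDistrLatticeType disp)
  (C : A -> Prop) : Type := {c : A | C c}.

Fixpoint eval_term (disp : Order.disp_t) (A : cbDistrLatticeType disp)
  (C : A -> Prop) (V : Type) (s : V -> A) (t : term (Lconst C) V) : A :=
  match t with
  | TVar v => s v
  | TConst k => proj1_sig k
  | TZero => \bot
  | TJoin t1 t2 => eval_term s t1 `|` eval_term s t2
  | TMeet t1 t2 => eval_term s t1 `&` eval_term s t2
  | TDiff t1 t2 => eval_term s t1 `\` eval_term s t2
  end.

Definition equation (disp : Order.disp_t) (A : cbDistrLatticeType disp)
  (C : A -> Prop) (n : nat) : Type :=
  (term (Lconst C) 'I_n * term (Lconst C) 'I_n)%type.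

Definition system (disp : Order.disp_t) (A : cbDistrLatticeType disp)
  (C : A -> Prop) (n : nat) : Type := equation C n -> Prop.

Definition is_solution (disp : Order.disp_t) (A : cbDistrLatticeType disp)
  (C : A -> Prop) (n : nat) (S : system C n) (s : 'I_n -> A) : Prop :=
  forall e, S e -> eval_term s e.1 = eval_term s e.2.

Definition equivalent_systems (disp : Order.disp_t) (A : cbDistrLatticeType disp)
  (C : A -> Prop) (n : nat) (S1 S2 : system C n) : Prop :=
  forall s : 'I_n -> A, is_solution S1 s <-> is_solution S2 s.

Definition weakly_equationally_noetherian (disp : Order.disp_t)
  (A : cbDistrLatticeType disp) (C : A -> Prop) : Prop :=
  forall (n : nat) (S : system C n),
    exists F : seq (equation C n),
      equivalent_systems S (fun e => Stdlib.Lists.List.In e F).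

Definition le_eq (K V : Type) (t s : term K V) : (term K V * term K V)%type :=
  (TJoin t s, s).

(* Main.v *)
Require Import Defs.
From mathcomp Require Import all_boot all_order.
From Stdlib Require Import Classical.
Import Order.Theory.
Set Implicit Arguments. Unset Strict Implicit.
Local Open Scope order_scope.

Section Aux.
Variables (disp : Order.disp_t) (A : cbDistrLatticeType disp) (C : A -> Prop).

Fixpoint ev {V : Type} (k : Lconst C -> A) (s : V -> A) (t : term (Lconst C) V) : A :=
  match t with
  | TVar v => s v
  | TConst c => k c
  | TZero => \bot
  | TJoin t1 t2 => ev k s t1 `|` ev k s t2
  | TMeet t1 t2 => ev k s t1 `&` ev k s t2
  | TDiff t1 t2 => ev k s t1 `\` ev k s t2
  end.

Lemma ev_val V (s : V -> A) t : eval_term s t = ev (fun c => proj1_sig c) s t.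
Proof. by elim: t => //= t1 -> t2 ->. Qed.

Lemma ev_ext V k k' (s s' : V -> A) t :
  (forall c, k c = k' c) -> (forall v, s v = s' v) -> ev k s t = ev k' s' t.
Proof. by move=> hk hs; elim: t => //= t1 -> t2 ->. Qed.

Lemma ev_hom V (phi : A -> A) k (s : V -> A) t :
  (forall a b, phi (a `|` b) = phi a `|` phi b) ->
  (forall a b, phi (a `&` b) = phi a `&` phi b) ->
  (forall a b, phi (a `\` b) = phi a `\` phi b) ->
  phi \bot = \bot ->
  phi (ev k s t) = ev (fun c => phi (k c)) (fun v => phi (s v)) t.
Proof.
move=> hU hI hB h0; elim: t => //= t1 IH1 t2 IH2.
- by rewrite hU IH1 IH2.
- by rewrite hI IH1 IH2.
- by rewrite hB IH1 IH2.
Qed.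

Arguments ev_hom {V} phi {k s t}.

Lemma homI (a : A) :
  [/\ (forall x y, (x `|` y) `&` a = (x `&` a) `|` (y `&` a)),
      (forall x y, (x `&` y) `&` a = (x `&` a) `&` (y `&` a)),
      (forall x y, (x `\` y) `&` a = (x `&` a) `\` (y `&` a)) &
      \bot `&` a = \bot].
Proof.
split.
- by move=> x y; rewrite meetUl.
- by move=> x y; rewrite meetACA meetxx.
- move=> x y; rewrite meetBx diffxI.
  have -> : (x `&` a) `\` a = \bot by apply/eqP; rewrite diff_eq0 leIr.
  by rewrite joinx0.
- by rewrite meet0x.
Qed.

Lemma homB (a : A) :
  [/\ (forall x y, (x `|` y) `\` a = (x `\` a) `|` (y `\` a)),
      (forall x y, (x `&` y) `\` a = (x `\` a) `&` (y `\` a)),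
      (forall x y, (x `\` y) `\` a = (x `\` a) `\` (y `\` a)) &
      \bot `\` a = \bot].
Proof.
split.
- by move=> x y; rewrite diffUx.
- by move=> x y; rewrite diffIx.
- by move=> x y; rewrite diffBx [in RHS]diffBx diffKU joinC.
- by rewrite diff0x.
Qed.

Definition T (t : term (Lconst C) 'I_1) (x : A) :=
  ev (fun c => proj1_sig c) (fun _ => x) t.

Lemma L1 t x y : x <= y -> T t x `&` x = T t y `&` x.
Proof.
move=> xy; case: (homI x) => h1 h2 h3 h4.
rewrite /T !(ev_hom (fun a => a `&` x) h1 h2 h3 h4) /=.
apply: ev_ext => // _; by rewrite meetxx meet_r.
Qed.

Arguments L1 t {x y}.

Lemma L2 t x : T t x `\` x = T t \bot `\` x.
Proof.
case: (homB x) => h1 h2 h3 h4.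
rewrite /T !(ev_hom (fun a => a `\` x) h1 h2 h3 h4) /=.
by apply: ev_ext => // _; rewrite diffxx diff0x.
Qed.

Lemma L3 t x K : T t x `&` K = T t (x `&` K) `&` K.
Proof.
case: (homI K) => h1 h2 h3 h4.
rewrite /T !(ev_hom (fun a => a `&` K) h1 h2 h3 h4) /=.
by apply: ev_ext => // _; rewrite -meetA meetxx.
Qed.

Fixpoint kt {V} (t : term (Lconst C) V) : A :=
  match t with
  | TConst c => proj1_sig c
  | TJoin t1 t2 | TMeet t1 t2 | TDiff t1 t2 => kt t1 `|` kt t2
  | _ => \bot
  end.

Fixpoint fl {V} (t : term (Lconst C) V) : bool :=
  match t with
  | TVar _ => true
  | TConst _ | TZero => false
  | TJoin t1 t2 => fl t1 || fl t2
  | TMeet t1 t2 => fl t1 && fl t2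
  | TDiff t1 t2 => fl t1 && ~~ fl t2
  end.

Lemma ev_kill V (s : V -> A) K t : kt t <= K ->
  ev (fun c => proj1_sig c `\` K) s t = ev (fun _ => \bot) s t.
Proof.
elim: t => //=.
- by move=> c ck; apply/eqP; rewrite diff_eq0.
- by move=> t1 IH1 t2 IH2; rewrite leUx => /andP[/IH1-> /IH2->].
- by move=> t1 IH1 t2 IH2; rewrite leUx => /andP[/IH1-> /IH2->].
- by move=> t1 IH1 t2 IH2; rewrite leUx => /andP[/IH1-> /IH2->].
Qed.

Lemma ev_fl (z : A) (t : term (Lconst C) 'I_1) :
  ev (fun _ => \bot) (fun _ => z) t = if fl t then z else \bot.
Proof.
elim: t => //= t1 -> t2 ->; case: (fl t1); case: (fl t2) => /=;
  by rewrite ?joinxx ?joinx0 ?join0x ?meetxx ?meetx0 ?meet0x ?diffxx ?diffx0 ?diff0x.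
Qed.

Lemma L4 t x K : kt t <= K -> T t x `\` K = if fl t then x `\` K else \bot.
Proof.
move=> hk; case: (homB K) => h1 h2 h3 h4.
by rewrite /T (ev_hom (fun a => a `\` K) h1 h2 h3 h4) /= ev_kill // ev_fl.
Qed.

Lemma split_eq (a b K : A) : a = b <-> a `&` K = b `&` K /\ a `\` K = b `\` K.
Proof.
split; first by move->.
by case=> h1 h2; rewrite -(joinIB K a) -(joinIB K b) h1 h2.
Qed.

Lemma eqL t1 t2 x y : x <= y -> T t1 \bot = T t2 \bot ->
  (T t1 x = T t2 x <-> x `&` T t1 y = x `&` T t2 y).
Proof.
move=> xy h0; rewrite (split_eq _ _ x) L2 [T t2 x `\` x]L2 h0 (L1 t1 xy) (L1 t2 xy) ![x `&` _]meetC.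
by split; [case | split].
Qed.

Lemma meet_eq_diff (x a b : A) :
  x `&` a = x `&` b <-> x `&` ((a `\` b) `|` (b `\` a)) = \bot.
Proof.
rewrite meetUr !meetxB; split.
- move=> h; apply/eqP; rewrite join_eq0 !diff_eq0 h leIr -h leIr //.
- move=> /eqP; rewrite join_eq0 !diff_eq0 => /andP[h1 h2].
  apply/eqP; rewrite eq_le.
  by rewrite lexI leIl h1 lexI leIl h2.
Qed.

Lemma C_ev (HC : is_subalgebra C) t y : C y -> C (T t y).
Proof.
case: HC => h0 hU hI hB cy; rewrite /T.
elim: t => //= [c|t1 I1 t2 I2|t1 I1 t2 I2|t1 I1 t2 I2]; first exact: proj2_sig c.
- exact: hU. - exact: hI. - exact: hB.
Qed.

Lemma C_kt (HC : is_subalgebra C) V (t : term (Lconst C) V) : C (kt t).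
Proof.
case: HC => h0 hU hI hB.
by elim: t => //= [c|t1 I1 t2 I2|t1 I1 t2 I2|t1 I1 t2 I2]; [exact: proj2_sig c|apply: (hU)..].
Qed.

Definition Kof (F : seq (equation C 1)) : A :=
  foldr (fun e acc => kt e.1 `|` (kt e.2 `|` acc)) \bot F.

Lemma Kof_ge F e : List.In e F -> kt e.1 <= Kof F /\ kt e.2 <= Kof F.
Proof.
elim: F => [//|e' F IH] /= [<-|/IH [h1 h2]].
- by split; [exact: leUl | apply: le_trans (leUr _ _); exact: leUl].
- by split; apply: le_trans (leUr _ _); apply: le_trans (leUr _ _).
Qed.

Lemma C_Kof (HC : is_subalgebra C) F : C (Kof F).
Proof.
have HC' := HC; case: HC => h0 hU hI hB.
elim: F => [//|e F IH] /=.
apply: (hU); first exact: (C_kt HC').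
apply: (hU) => //; exact: (C_kt HC').
Qed.

Definition Dl (K : A) (e : equation C 1) : A :=
  (T e.1 K `\` T e.2 K) `|` (T e.2 K `\` T e.1 K).

Definition dof (K : A) (F : seq (equation C 1)) : A :=
  foldr (fun e acc => acc `\` Dl K e) K F.

Lemma dof_le K F x : x <= dof K F <->
  x <= K /\ forall e, List.In e F -> x `&` Dl K e = \bot.
Proof.
elim: F => [|e F IH] /=; first by split; [move=> h; split | case].
rewrite leBRL; split.
- move=> /andP[/IH [h1 h2] /eqP h3]; split => // e' [<-//|]; exact: h2.
- case=> h1 h2; apply/andP; split; last by apply/eqP; apply: h2; left.
  by apply/IH; split => // e' he'; apply: h2; right.
Qed.

Lemma C_dof (HC : is_subalgebra C) K F : C K -> C (dof K F).
Proof.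
move=> cK; have HC' := HC; case: HC => h0 hU hI hB.
elim: F => [//|e F IH] /=; apply: (hB) => //; rewrite /Dl.
by apply: (hU); apply: (hB); apply: C_ev.
Qed.

End Aux.

Theorem mainTheorem6 (disp : Order.disp_t) (A : cbDistrLatticeType disp)
  (C : A -> Prop) (HC : is_subalgebra C)
  (J : Type) (c : J -> A) (HcC : forall j, C (c j)) :
  weakly_equationally_noetherian C ->
  ~ (exists u : A, forall j, c j <= u) ->
  exists (d : A) (Hd : C d),
    equivalent_systems
      (fun e : equation C 1 =>
         exists j, e = (TMeet (TVar _ ord0) (TConst _ (exist C (c j) (HcC j))), TZero))
      (fun e : equation C 1 =>
         e = le_eq (TVar _ ord0) (TConst _ (exist C d Hd))).
Proof.
move=> WEN Hub.
set S := (fun e : equation C 1 => exists j, _).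
have [F HF] := WEN 1 S.
have evs : forall (s : 'I_1 -> A) (t : term (Lconst C) 'I_1), eval_term s t = T t (s ord0).
  by move=> s t; rewrite ev_val /T; apply: ev_ext => // i; rewrite (ord1 i).
have key : forall x, (forall j, x `&` c j = \bot) <->
    forall e, List.In e F -> T e.1 x = T e.2 x.
  move=> x; split => H.
  - have : is_solution S (fun _ => x) by move=> e [j ->] /=; exact: H.
    move/HF => H2 e He; have := H2 e He; by rewrite !evs.
  - have : is_solution (fun e => List.In e F) (fun _ => x).
      by move=> e He; rewrite !evs; exact: H.
    move/HF => H2 j; exact: (H2 _ (ex_intro _ j erefl)).
have sol0 : forall e, List.In e F -> T e.1 \bot = T e.2 \bot.
  by apply/key => j; rewrite meet0x.
set K := Kof F.
have HK := @Kof_ge _ _ C F.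
case: (classic (exists e, List.In e F /\ fl e.1 <> fl e.2)) => [[e [He Hfl]]|Hnot].
- have leK : forall x, (forall j, x `&` c j = \bot) -> x <= K.
    move=> x /key /(_ e He) Heq.
    have := L4 x (proj1 (HK e He)); have := L4 x (proj2 (HK e He)).
    move=> h2 h1; rewrite Heq h2 in h1; move: h1 Hfl.
    case: (fl e.1); case: (fl e.2) => // /eqP; rewrite ?diff_eq0 // eq_sym diff_eq0 //.
  have cK : C K by exact: C_Kof.
  exists (dof K F), (C_dof HC F cK) => s; split.
  + move=> Hs; have Hx : forall j, s ord0 `&` c j = \bot.
      by move=> j; exact: (Hs _ (ex_intro _ j erefl)).
    move=> e' -> /=; apply: join_r.
    apply/dof_le; split; first exact: leK.
    move=> e2 He2; rewrite /Dl; apply/meet_eq_diff.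
    apply/(eqL (leK _ Hx) (sol0 _ He2)); exact: (proj1 (key _) Hx).
  + move=> Hs; have := Hs _ erefl => /= /join_idPr /dof_le [h1 h2].
    move=> e' [j ->] /=; apply: (proj2 (key _)) => e2 He2.
    apply/(eqL h1 (sol0 _ He2)); apply/meet_eq_diff; exact: h2.
- have Hfl : forall e, List.In e F -> fl e.1 = fl e.2.
    move=> e He; case: (boolP (fl e.1 == fl e.2)) => [/eqP //|/eqP h].
    by exfalso; apply: Hnot; exists e.
  have eqA : forall e z, List.In e F ->
      (T e.1 z = T e.2 z <-> T e.1 z `&` K = T e.2 z `&` K).
    move=> e z He; rewrite (split_eq _ _ K) (L4 z (proj1 (HK e He)))
      (L4 z (proj2 (HK e He))) (Hfl e He).
    by split; [case | split].
  have eqK : forall e x, List.In e F ->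
      (T e.1 x = T e.2 x <-> T e.1 (x `&` K) = T e.2 (x `&` K)).
    move=> e x He; rewrite (eqA e x He) (eqA e _ He) (L3 _ x K) [T e.2 x `&` K](L3 _ x K).
    by [].
  case: (classic (exists j, ~ c j <= K)) => [[j hj]|h]; last first.
    by exfalso; apply: Hub; exists K => j; apply: NNPP => hj; apply: h; exists j.
  have : forall j', (c j `\` K) `&` c j' = \bot.
    apply/key => e He; apply/(eqK e _ He); rewrite diffIK; exact: sol0.
  move/(_ j); rewrite meetBx meetxx => /eqP; rewrite diff_eq0 => hjK.
  by exfalso; apply: hj.
Qed.
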